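(* Let $\Delta$ be a simplicial polytopal fan in $\mathbb{R}^d$ with ray generators $\mathbf{v}_1,\ldots,\mathbf{v}_n$. For all polytopes $P(\mathbf{h}),P(\mathbf{h}')\in\mathcal{P}(\Delta)$, \[ d_H(P(\mathbf{h}),P(\mathbf{h}'))\le\sqrt{d}\,c^\Delta\,\|\mathbf{h}-\mathbf{h}'\|. \]
   Context: A fan is simplicial if every cone is generated by linearly independent vectors; polytopal if it is the normal fan of a polytope. For $\mathbf{h}\in\mathbb{R}^n$, $P(\mathbf{h})=\{\mathbf{x}\colon\langle\mathbf{x},\mathbf{v}_i\rangle\le h_i\ \forall i\}$. The deformation cone $\mathcal{P}(\Delta)$ is the set of polytopes whose normal fan is coarsened by $\Delta$, identified via support vectors $\mathbf{h}=(h_P(\mathbf{v}_i))_i$ with a closed polyhedral cone in $\mathbb{R}^n$. For $\mathbf{u}\in\mathbb{R}^d$, with $\sigma$ the cone of $\Delta$ containing $\mathbf{u}$ in its relative interior and $\mathbf{u}=\sum_{k\in I_\sigma}\lambda_k\mathbf{v}_k$ over the generators of $\sigma$, set $[\mathbf{u}]_i=\lambda_i$ for $i\in I_\sigma$ and $0$ otherwise. $c^\Delta=\max_{\mathbf{u}\in\mathbb{S}^{d-1}}\max_{1\le i\le n}[\mathbf{u}]_i$. $d_H$ is the Hausdorff distance. *)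

(* Defs.v *)
From HB Require Import structures.
From mathcomp Require Import all_boot all_order all_algebra.
From mathcomp Require Import all_classical all_reals.
Set Implicit Arguments. Unset Strict Implicit. Unset Printing Implicit Defensive.
Import Order.TTheory GRing.Theory Num.Theory.
Local Open Scope classical_set_scope.
Local Open Scope ring_scope.

Section Fans.
Variable R : realType.

Definition dotv k (x y : 'rV[R]_k) : R := \sum_(j < k) x 0 j * y 0 j.
Definition enorm k (x : 'rV[R]_k) : R := Num.sqrt (dotv x x).

Variables (d n : nat) (v : 'I_n -> 'rV[R]_d).

Definition gcone (S : {set 'I_n}) : set 'rV[R]_d :=
  [set x | exists lam : 'I_n -> R,
     (forall i, i \in S -> 0 <= lam i) /\ x = \sum_(i in S) lam i *: v i].
(* its linear span (= affine hull, as cones contain 0) *)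
Definition gspan (S : {set 'I_n}) : set 'rV[R]_d :=
  [set x | exists lam : 'I_n -> R, x = \sum_(i in S) lam i *: v i].
Definition relint_gcone (S : {set 'I_n}) (u : 'rV[R]_d) : Prop :=
  gcone S u /\ exists e : R, 0 < e /\
    forall y, gspan S y -> enorm (y - u) < e -> gcone S y.

Definition is_face (C F : set 'rV[R]_d) : Prop :=
  exists w : 'rV[R]_d, (forall x, C x -> dotv w x <= 0) /\
    F = C `&` [set x | dotv w x = 0].

(* Delta is a (pointed, polyhedral) fan whose rays are generated by v_1..v_n:
   each cone of Delta is the cone generated by a set of the v_i, namely all
   the v_i lying in it; Delta is closed under taking faces; two cones of Delta
   meet in a common face; the rays of Delta are exactly the cones of the v_i. *)
Definition is_fan (Delta : {set {set 'I_n}}) : Prop :=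
  [/\ (forall i, v i != 0 /\ [set i]%SET \in Delta),
      (forall S, S \in Delta -> forall i, gcone S (v i) -> i \in S),
      (forall S, S \in Delta -> forall F, is_face (gcone S) F ->
          exists2 T, T \in Delta & F = gcone T) &
      (forall S T, S \in Delta -> T \in Delta ->
          is_face (gcone S) (gcone S `&` gcone T) /\
          is_face (gcone T) (gcone S `&` gcone T))].

Definition is_simplicial (Delta : {set {set 'I_n}}) : Prop :=
  forall S, S \in Delta -> forall lam : 'I_n -> R,
    \sum_(i in S) lam i *: v i = 0 -> forall i, i \in S -> lam i = 0.

Definition is_polytope (P : set 'rV[R]_d) : Prop :=
  exists m (p : 'I_m.+1 -> 'rV[R]_d),
    P = [set x | exists mu : 'I_m.+1 -> R, (forall k, 0 <= mu k) /\
           \sum_k mu k = 1 /\ x = \sum_k mu k *: p k].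

(* normal cone of P at x; the normal fan of P is {normal_cone P x | x in P} *)
Definition normal_cone (P : set 'rV[R]_d) (x : 'rV[R]_d) : set 'rV[R]_d :=
  [set u | forall y, P y -> dotv u y <= dotv u x].

Definition is_polytopal (Delta : {set {set 'I_n}}) : Prop :=
  exists Q, is_polytope Q /\
    forall C : set 'rV[R]_d,
      (exists2 x, Q x & C = normal_cone Q x) <->
      (exists2 S, S \in Delta & C = gcone S).

Definition coarsened_by (Delta : {set {set 'I_n}}) (P : set 'rV[R]_d) : Prop :=
  (forall S, S \in Delta -> exists2 x, P x & gcone S `<=` normal_cone P x) /\
  (forall x, P x -> normal_cone P x =
     \bigcup_(S in [set S | S \in Delta /\ gcone S `<=` normal_cone P x]) gcone S).

Definition support_fun (P : set 'rV[R]_d) (u : 'rV[R]_d) : R :=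
  sup [set dotv x u | x in P].

Definition Ph (h : 'rV[R]_n) : set 'rV[R]_d :=
  [set x | forall i, dotv x (v i) <= h 0 i].

Definition deformation_cone (Delta : {set {set 'I_n}}) : set 'rV[R]_n :=
  [set h | exists P, [/\ is_polytope P, coarsened_by Delta P &
                        forall i, h 0 i = support_fun P (v i)]].

(* [u]: coefficients of u w.r.t. the generators of the cone sigma of Delta
   containing u in its relative interior (0 outside I_sigma) *)
Definition fan_coords (Delta : {set {set 'I_n}}) (u : 'rV[R]_d) : 'rV[R]_n :=
  xget 0 [set lam : 'rV[R]_n | exists2 S, S \in Delta &
     [/\ relint_gcone S u, (forall i, i \notin S -> lam 0 i = 0) &
         u = \sum_(i in S) lam 0 i *: v i]].

Definition cDelta (Delta : {set {set 'I_n}}) : R :=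
  sup [set r | exists (u : 'rV[R]_d) (i : 'I_n), enorm u = 1 /\ r = fan_coords Delta u 0 i].

End Fans.

Definition hausdorff (R : realType) (d : nat) (A B : set 'rV[R]_d) : R :=
  Num.max (sup [set inf [set enorm (x - y) | y in B] | x in A])
          (sup [set inf [set enorm (x - y) | x in A] | y in B]).

(* Main.v *)
Require Import Defs.
From HB Require Import structures.
From mathcomp Require Import all_boot all_order all_algebra.
From mathcomp Require Import all_classical all_reals.
From mathcomp Require Import ring lra.
Import Order.TTheory GRing.Theory Num.Theory.
Local Open Scope classical_set_scope.
Local Open Scope ring_scope.

Section Dot.
Variable R : realType.
Variable k : nat.

Lemma dotvC (x y : 'rV[R]_k) : dotv x y = dotv y x.
Proof. by apply: eq_bigr => j _; rewrite mulrC. Qed.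

Lemma dotvDl (x y z : 'rV[R]_k) : dotv (x + y) z = dotv x z + dotv y z.
Proof. by rewrite /dotv -big_split; apply: eq_bigr => j _; rewrite !mxE mulrDl. Qed.

Lemma dotvZl a (x y : 'rV[R]_k) : dotv (a *: x) y = a * dotv x y.
Proof. by rewrite /dotv mulr_sumr; apply: eq_bigr => j _; rewrite !mxE mulrA. Qed.

Lemma dotv0l (y : 'rV[R]_k) : dotv 0 y = 0.
Proof. by rewrite /dotv big1 // => j _; rewrite mxE mul0r. Qed.

Lemma dotvNl (x y : 'rV[R]_k) : dotv (- x) y = - dotv x y.
Proof. by rewrite -scaleN1r dotvZl mulN1r. Qed.

Lemma dotvBl (x y z : 'rV[R]_k) : dotv (x - y) z = dotv x z - dotv y z.
Proof. by rewrite dotvDl dotvNl. Qed.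

Lemma dotvDr (x y z : 'rV[R]_k) : dotv z (x + y) = dotv z x + dotv z y.
Proof. by rewrite dotvC dotvDl ![dotv _ z]dotvC. Qed.
Lemma dotvZr a (x y : 'rV[R]_k) : dotv y (a *: x) = a * dotv y x.
Proof. by rewrite dotvC dotvZl dotvC. Qed.
Lemma dotvNr (x y : 'rV[R]_k) : dotv y (- x) = - dotv y x.
Proof. by rewrite dotvC dotvNl dotvC. Qed.
Lemma dotvBr (x y z : 'rV[R]_k) : dotv z (x - y) = dotv z x - dotv z y.
Proof. by rewrite dotvDr dotvNr. Qed.

Lemma dotv_suml (I : finType) (P : pred I) (a : I -> R) (x : I -> 'rV[R]_k) y :
  dotv (\sum_(i | P i) a i *: x i) y = \sum_(i | P i) a i * dotv (x i) y.
Proof.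
rewrite (big_morph (fun z => dotv z y) (fun a b => dotvDl a b y) (dotv0l y)).
by apply: eq_bigr => i _; rewrite dotvZl.
Qed.

Lemma dotv_sumr (I : finType) (P : pred I) (a : I -> R) (x : I -> 'rV[R]_k) y :
  dotv y (\sum_(i | P i) a i *: x i) = \sum_(i | P i) a i * dotv y (x i).
Proof. by rewrite dotvC dotv_suml; apply: eq_bigr => i _; rewrite dotvC. Qed.

Lemma dotv_ge0 (x : 'rV[R]_k) : 0 <= dotv x x.
Proof. by apply: sumr_ge0 => j _; rewrite -expr2 sqr_ge0. Qed.

Lemma enorm_ge0 (x : 'rV[R]_k) : 0 <= enorm x.
Proof. exact: sqrtr_ge0. Qed.

Lemma enorm_sq (x : 'rV[R]_k) : enorm x ^+ 2 = dotv x x.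
Proof. by rewrite sqr_sqrtr // dotv_ge0. Qed.

Lemma dotv_eq0 (x : 'rV[R]_k) : dotv x x = 0 -> x = 0.
Proof.
move=> /eqP; rewrite psumr_eq0; last by move=> j _; rewrite -expr2 sqr_ge0.
move=> /allP H; apply/rowP => j; rewrite mxE.
have /implyP := H j (mem_index_enum _); move=> /(_ isT).
by rewrite mulf_eq0 orbb => /eqP.
Qed.

Lemma enorm_eq0 (x : 'rV[R]_k) : enorm x = 0 -> x = 0.
Proof. by move=> H; apply: dotv_eq0; rewrite -enorm_sq H expr0n. Qed.

Lemma enorm0 : enorm (0 : 'rV[R]_k) = 0.
Proof. by rewrite /enorm dotv0l sqrtr0. Qed.

Lemma CauchyS (x y : 'rV[R]_k) : dotv x y <= enorm x * enorm y.
Proof.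
have [a0|a0] := eqVneq (enorm x) 0.
  by rewrite (enorm_eq0 _ a0) dotv0l enorm0 mul0r.
have [b0|b0] := eqVneq (enorm y) 0.
  by rewrite (enorm_eq0 _ b0) dotvC dotv0l enorm0 mulr0.
have ha : 0 < enorm x by rewrite lt_neqAle eq_sym a0 enorm_ge0.
have hb : 0 < enorm y by rewrite lt_neqAle eq_sym b0 enorm_ge0.
have := dotv_ge0 (enorm y *: x - enorm x *: y).
rewrite !(dotvBl, dotvBr, dotvZl, dotvZr) -!enorm_sq (dotvC y x).
set a := enorm x; set b := enorm y; set c := dotv x y => H.
have E : b * (b * a ^+ 2 - a * c) - a * (b * c - a * b ^+ 2) = 2 * ((a * b) * (a * b - c)) by ring.
rewrite E pmulr_rge0 // pmulr_rge0 ?mulr_gt0 // subr_ge0 in H.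
by rewrite H.
Qed.

Lemma enorm_coord (x : 'rV[R]_k) j : `|x 0 j| <= enorm x.
Proof.
rewrite -sqrtr_sqr ler_sqrt ?dotv_ge0 // /dotv (bigD1 j) //= expr2 lerDl.
by apply: sumr_ge0 => i _; rewrite -expr2 sqr_ge0.
Qed.

Lemma enormN (x : 'rV[R]_k) : enorm (- x) = enorm x.
Proof. by rewrite /enorm dotvNl dotvNr opprK. Qed.

Lemma enormZ a (x : 'rV[R]_k) : enorm (a *: x) = `|a| * enorm x.
Proof. by rewrite /enorm dotvZl dotvZr mulrA -expr2 sqrtrM ?sqr_ge0 // sqrtr_sqr. Qed.

End Dot.
Arguments dotvC {R k}.
Arguments dotvDl {R k}.
Arguments dotvZl {R k}.
Arguments dotv0l {R k}.
Arguments dotvNl {R k}.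
Arguments dotvBl {R k}.
Arguments dotvDr {R k}.
Arguments dotvZr {R k}.
Arguments dotvNr {R k}.
Arguments dotvBr {R k}.
Arguments dotv_suml {R k}.
Arguments dotv_sumr {R k}.
Arguments dotv_ge0 {R k}.
Arguments enorm_ge0 {R k}.
Arguments enorm_sq {R k}.
Arguments dotv_eq0 {R k x}.
Arguments enorm_eq0 {R k x}.
Arguments enorm0 {R k}.
Arguments CauchyS {R k}.
Arguments enorm_coord {R k}.
Arguments enormN {R k}.
Arguments enormZ {R k}.

Section Descent.
Variable R : realType.

Lemma sup_inf_le (T : Type) (A B : set T) (f : T -> T -> R) K :
  A !=set0 -> (forall x y, 0 <= f x y) ->
  (forall x, A x -> forall e, 0 < e -> exists2 y, B y & f x y <= K + e) ->
  sup [set inf [set f x y | y in B] | x in A] <= K.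
Proof.
move=> [x0 Ax0] f0 H; apply: ge_sup.
  by exists (inf [set f x0 y | y in B]); exists x0.
move=> _ [x Ax <-]; apply/ler_addgt0Pr => e he.
have [y By Hy] := H x Ax e he; apply: le_trans Hy.
apply: ge_inf; last by exists y.
by exists 0 => _ [y' _ <-]; exact: f0.
Qed.

Variable d : nat.

Lemma descent (B : set 'rV[R]_d) (x : 'rV[R]_d) (K : R) :
  0 <= K -> B !=set0 ->
  (forall y z t, B y -> B z -> 0 <= t <= 1 -> B (y + t *: (z - y))) ->
  (exists D, forall y z, B y -> B z -> dotv (z - y) (z - y) <= D) ->
  (forall w, exists2 z, B z & dotv w x - dotv w z <= enorm w * K) ->
  forall e, 0 < e -> exists2 y, B y & enorm (x - y) <= K + e.
Proof.
move=> K0 [y0 By0] Bconv [D HD] H e he.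
case: (pselect (exists2 y, B y & enorm (x - y) <= K + e)) => // Nex.
have Ny : forall y, B y -> K + e < enorm (x - y).
  by move=> y By; rewrite ltNge; apply/negP => Hy; apply: Nex; exists y.
have D0 : 0 <= D by apply: le_trans (HD _ _ By0 By0); exact: dotv_ge0.
pose t := Num.min 1 (e ^+ 2 / (D + 1)).
have t0 : 0 < t by rewrite lt_min ltr01 /= divr_gt0 ?exprn_gt0 // ltr_wpDl.
have t1 : t <= 1 by rewrite ge_min lexx.
have tD : t * (D + 1) <= e ^+ 2.
  by rewrite -ler_pdivlMr ?ltr_wpDl // ge_min lexx orbT.
pose g := t * e ^+ 2.
have g0 : 0 < g by rewrite mulr_gt0 ?exprn_gt0.
have step : forall y, B y -> exists2 y', B y' &
    dotv (x - y') (x - y') <= dotv (x - y) (x - y) - g.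
  move=> y By; set w := x - y.
  have [z Bz Hz] := H w.
  have hw := Ny y By.
  have hwe : e ^+ 2 <= dotv w (z - y).
    have -> : dotv w (z - y) = dotv w w - (dotv w x - dotv w z).
      by rewrite /w !dotvBr; ring.
    rewrite -enorm_sq; set r := enorm w in hw Hz *.
    have r0 : 0 <= r by exact: enorm_ge0.
    nra.
  exists (y + t *: (z - y)); first by apply: Bconv => //; rewrite (ltW t0).
  have -> : x - (y + t *: (z - y)) = w - t *: (z - y) by rewrite /w opprD addrA.
  have hq := HD _ _ By Bz; move: hwe hq; set q := z - y; clearbody w q => hwe hq.
  rewrite !(dotvBl, dotvBr, dotvZl, dotvZr) (dotvC q w).
  move: hwe hq; set p := dotv w q; set qq := dotv q q => hwe hq.
  rewrite /g.
  nra.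
have iter : forall N : nat, exists2 y, B y &
    dotv (x - y) (x - y) <= dotv (x - y0) (x - y0) - N%:R * g.
  elim=> [|N [y By Hy]]; first by exists y0 => //; rewrite mul0r subr0.
  have [y' By' Hy'] := step y By; exists y' => //.
  by apply: le_trans Hy' _; rewrite -natr1 mulrDl mul1r opprD addrA lerD2r.
pose M := dotv (x - y0) (x - y0) / g.
have M0 : 0 <= M by rewrite divr_ge0 ?dotv_ge0 // ltW.
have := archi_boundP M0; set N := Num.Def.archi_bound M => HN.
have [y By Hy] := iter N.
have := dotv_ge0 (x - y); move: Hy.
have : dotv (x - y0) (x - y0) < N%:R * g by rewrite -ltr_pdivrMr.
lra.
Qed.

End Descent.
Arguments sup_inf_le {R T A B f K}.
Arguments descent {R d B x K}.

Section LinAlg.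
Variable R : realType.
Variables (d n : nat) (v : 'I_n -> 'rV[R]_d).

Definition indep (S : {set 'I_n}) := forall lam : 'I_n -> R,
  \sum_(i in S) lam i *: v i = 0 -> forall i, i \in S -> lam i = 0.

Definition Mat (S : {set 'I_n}) : 'M[R]_(#|S|, d) :=
  \matrix_(i, j) v (enum_val i) 0 j.

Lemma Mat_mul (S : {set 'I_n}) (a : 'rV[R]_#|S|) :
  a *m Mat S = \sum_(i < #|S|) a 0 i *: v (enum_val i).
Proof.
apply/rowP => j; rewrite !mxE summxE; apply: eq_bigr => i _.
by rewrite !mxE.
Qed.

Lemma sum_enum (S : {set 'I_n}) (lam : 'I_n -> R) :
  \sum_(i in S) lam i *: v i =
  \sum_(i < #|S|) lam (enum_val i) *: v (enum_val i).
Proof. by rewrite big_enum_val. Qed.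

Lemma row_free_Mat (S : {set 'I_n}) : indep S -> row_free (Mat S).
Proof.
move=> HS; apply: inj_row_free => a Ha.
case: (pselect (exists k, k \in S)) => [[k0 Hk0]|NS]; last first.
  apply/rowP => i; exfalso; apply: NS; exists (enum_val i); exact: enum_valP.
pose lam k := a 0 (enum_rank_in Hk0 k).
have H0 : \sum_(i in S) lam i *: v i = 0.
  rewrite sum_enum; transitivity (a *m Mat S); last exact: Ha.
  rewrite Mat_mul; apply: eq_bigr => i _.
  by rewrite /lam enum_valK_in.
apply/rowP => i; rewrite mxE.
have := HS lam H0 (enum_val i) (enum_valP i).
by rewrite /lam enum_valK_in.
Qed.

Lemma coef_bound (S : {set 'I_n}) : indep S -> exists C : R, 0 <= C /\
  forall lam : 'I_n -> R, (forall k, k \notin S -> lam k = 0) ->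
  forall k, `|lam k| <= C * enorm (\sum_(i in S) lam i *: v i).
Proof.
move=> /row_free_Mat /row_freeP [B HB].
exists (\sum_j \sum_i `|B j i|); split.
  by apply: sumr_ge0 => j _; apply: sumr_ge0 => i _.
move=> lam Hlam k.
set y := \sum_(i in S) lam i *: v i.
have C0 : 0 <= \sum_j \sum_i `|B j i| by apply: sumr_ge0 => j _; apply: sumr_ge0.
case: (boolP (k \in S)) => Hk; last first.
  by rewrite Hlam // normr0 mulr_ge0 // enorm_ge0.
pose a := \row_(i < #|S|) lam (enum_val i).
have Ha : a = y *m B.
  have -> : y = a *m Mat S.
    by rewrite Mat_mul /y sum_enum; apply: eq_bigr => i _; rewrite mxE.
  by rewrite -mulmxA HB mulmx1.
have -> : lam k = a 0 (enum_rank_in Hk k) by rewrite mxE enum_rankK_in.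
rewrite Ha mxE; set i0 := enum_rank_in Hk k.
apply: le_trans (ler_norm_sum _ _ _) _.
rewrite mulr_suml; apply: ler_sum => j _.
rewrite normrM mulrC; apply: ler_pM => //; last exact: enorm_coord.
by rewrite (bigD1 i0) //= lerDl sumr_ge0.
Qed.

Lemma dual_vec (S : {set 'I_n}) : indep S -> forall b : 'I_n -> R,
  exists w : 'rV[R]_d, forall k, k \in S -> dotv w (v k) = b k.
Proof.
move=> /row_free_Mat /row_freeP [B HB] b.
pose bc := \col_(i < #|S|) b (enum_val i).
pose wc := B *m bc.
exists wc^T => k Hk.
have E : Mat S *m wc = bc by rewrite /wc mulmxA HB mul1mx.
have := congr1 (fun M : 'cV[R]_#|S| => M (enum_rank_in Hk k) 0) E.
rewrite !mxE enum_rankK_in // => <-.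
rewrite dotvC; apply: eq_bigr => j _; rewrite !mxE enum_rankK_in //.
Qed.

End LinAlg.
Arguments indep {R d n}.
Arguments Mat {R d n}.
Arguments coef_bound {R d n v S}.
Arguments dual_vec {R d n v S}.
Arguments row_free_Mat {R d n v S}.

Section FanPart.
Variable R : realType.
Variables (d n : nat) (v : 'I_n -> 'rV[R]_d) (Delta : {set {set 'I_n}}).

Lemma gcone_gen {S : {set 'I_n}} {i} : i \in S -> gcone v S (v i).
Proof.
move=> Hi; exists (fun k => if k == i then 1 else 0); split.
  by move=> k _; case: ifP.
rewrite (bigD1 i) //= eqxx scale1r big1 ?addr0 // => k /andP [_ /negbTE ->].
by rewrite scale0r.
Qed.

Lemma coef_uniq (S : {set 'I_n}) (a b : 'I_n -> R) : indep v S ->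
  \sum_(i in S) a i *: v i = \sum_(i in S) b i *: v i ->
  forall k, k \in S -> a k = b k.
Proof.
move=> HS E k Hk; apply/eqP; rewrite -subr_eq0; apply/eqP.
apply: (HS (fun i => a i - b i)) => //.
by rewrite (eq_bigr (fun i => a i *: v i - b i *: v i)) ?sumrB ?E ?subrr //
  => i _; rewrite scalerBl.
Qed.

Lemma complete : is_polytopal v Delta ->
  forall u, exists2 S, S \in Delta & gcone v S u.
Proof.
move=> [Q [[m [p HQ]] Hiff]] u.
case: (@arg_maxP _ R _ ord0 predT (fun k => dotv u (p k)) isT) => k _ Hk.
have Qk : Q (p k).
  rewrite HQ; exists (fun j => if j == k then 1 else 0); split.
    by move=> j; case: ifP.
  split; first by rewrite (bigD1 k) //= eqxx big1 ?addr0 // => j /negbTE ->.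
  rewrite (bigD1 k) //= eqxx scale1r big1 ?addr0 // => j /negbTE ->.
  by rewrite scale0r.
have [S HS E] := (proj1 (Hiff (normal_cone Q (p k)))) (ex_intro2 _ _ _ Qk erefl).
exists S => //; rewrite -E => y; rewrite HQ => -[mu [mu0 [mu1 ->]]].
rewrite dotv_sumr; apply: le_trans (_ : \sum_j mu j * dotv u (p k) <= _).
  by apply: ler_sum => j _; apply: ler_wpM2l => //; exact: Hk.
by rewrite -mulr_suml mu1 mul1r.
Qed.


Lemma uniform_bound : is_simplicial v Delta -> exists C : R, 0 <= C /\
  forall S, S \in Delta -> forall lam : 'I_n -> R,
  (forall k, k \notin S -> lam k = 0) ->
  forall k, `|lam k| <= C * enorm (\sum_(i in S) lam i *: v i).
Proof.
move=> Hs.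
have H : forall S : {set 'I_n}, exists C : R, 0 <= C /\ (S \in Delta ->
  forall lam : 'I_n -> R, (forall k, k \notin S -> lam k = 0) ->
  forall k, `|lam k| <= C * enorm (\sum_(i in S) lam i *: v i)).
  move=> S; case: (boolP (S \in Delta)) => HS; last by exists 0.
  have [C [C0 HC]] := coef_bound (Hs S HS); by exists C.
have [f Hf] := choice H.
have f0 : forall S, 0 <= f S by move=> S; case: (Hf S).
exists (\sum_S f S); split; first exact: sumr_ge0.
move=> S HS lam Hlam k; apply: le_trans ((proj2 (Hf S)) HS lam Hlam k) _.
apply: ler_wpM2r; first exact: enorm_ge0.
by rewrite (bigD1 S) //= lerDl sumr_ge0.
Qed.

Lemma relint_exists : is_fan v Delta -> is_simplicial v Delta ->
  is_polytopal v Delta ->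
  forall u, exists2 S, S \in Delta & relint_gcone v S u.
Proof.
move=> [Hf1 Hf2 Hf3 Hf4] Hs Hp u.
have [C [C0 HC]] := uniform_bound Hs.
have [S0 HS0 Hu0] := complete Hp u.
have step : forall S : {set 'I_n}, S \in Delta -> gcone v S u ->
  relint_gcone v S u \/ exists2 T, T \in Delta & (#|T| < #|S|)%N /\ gcone v T u.
  move=> S HS [lam [lam0 Hlu]].
  case: (pselect (exists2 k0, k0 \in S & lam k0 = 0)) => [[k0 Hk0 Hl0]|Npos].
    right.
    have [w Hw] := dual_vec (Hs S HS) (fun k => if k == k0 then -1 else 0).
    have Hdot : forall mu : 'I_n -> R, dotv w (\sum_(i in S) mu i *: v i) = - mu k0.
      move=> mu; rewrite dotv_sumr (bigD1 k0) //= Hw // eqxx big1 ?addr0 ?mulrN1 //.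
      by move=> k /andP [Hk /negbTE Hne]; rewrite Hw // Hne mulr0.
    have Hface : is_face (gcone v S) (gcone v S `&` [set x | dotv w x = 0]).
      exists w; split => // x [mu [mu0 ->]]; rewrite Hdot oppr_le0; exact: mu0.
    have [T HT ET] := Hf3 S HS _ Hface.
    exists T => //; split; last first.
      rewrite -ET; split; first by exists lam.
      by rewrite /= Hlu Hdot Hl0 oppr0.
    apply: proper_card; apply/properP; split.
      apply/fintype.subsetP => i Hi; apply: (Hf2 S HS i).
      by have : gcone v T (v i) := gcone_gen Hi; rewrite -ET => -[].
    exists k0 => //; apply/negP => Hk.
    have : gcone v T (v k0) := gcone_gen Hk; rewrite -ET => -[_ /=].
    by rewrite Hw // eqxx => /eqP; rewrite oppr_eq0 oner_eq0.
  left.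
  have pos : forall k, k \in S -> 0 < lam k.
    move=> k Hk; rewrite lt_neqAle lam0 // andbT eq_sym; apply/eqP => E.
    by apply: Npos; exists k.
  split; first by exists lam.
  pose s := 1 + \sum_(k in S) (lam k)^-1.
  have sge : forall k, k \in S -> (lam k)^-1 <= s.
    move=> k Hk; rewrite /s (bigD1 k) //= addrCA lerDl.
    apply: addr_ge0 => //; apply: sumr_ge0 => i /andP [Hi _].
    by rewrite invr_ge0 ltW // pos.
  have s0 : 0 < s.
    rewrite /s ltr_wpDr // sumr_ge0 // => i Hi.
    by rewrite invr_ge0 ltW // pos.
  have ls : forall k, k \in S -> 1 / s <= lam k.
    move=> k Hk; rewrite ler_pdivrMr //.
    have hk := pos k Hk.
    rewrite -(mulfV (lt0r_neq0 hk)); apply: ler_wpM2l; first exact: ltW.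
    exact: sge.
  pose e := (1 / s) / (C + 1).
  have C1 : 0 < C + 1 by rewrite ltr_wpDl.
  have e0 : 0 < e by rewrite divr_gt0 // divr_gt0.
  have Ce : C * e <= 1 / s.
    rewrite /e mulrA ler_pdivrMr // mulrDr mulr1 mulrC lerDl.
    by rewrite divr_ge0 // ltW.
  exists e; split => // y [mu Hy] Hyu.
  pose del k := if k \in S then mu k - lam k else 0.
  have Hdel : \sum_(i in S) del i *: v i = y - u.
    rewrite Hy Hlu -sumrB; apply: eq_bigr => i Hi; by rewrite /del Hi scalerBl.
  have Hdel0 : forall k, k \notin S -> del k = 0 by move=> k Hk; rewrite /del (negbTE Hk).
  have Hb := HC S HS del Hdel0.
  exists mu; split => // k Hk.
  have := Hb k; rewrite Hdel /del Hk => Hk'.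
  have en0 := enorm_ge0 (y - u).
  have : C * enorm (y - u) <= C * e by apply: ler_wpM2l => //; exact: ltW.
  have := ls k Hk; have := ler_norm (mu k - lam k); move: Hk' Ce.
  rewrite ler_norml => /andP [H1 _] Ce. lra.
suff H : forall N (S : {set 'I_n}), (#|S| <= N)%N -> S \in Delta -> gcone v S u ->
  exists2 T, T \in Delta & relint_gcone v T u by exact: (H _ S0 (leqnn _) HS0 Hu0).
elim=> [|N IH] S HN HS Hu; (case: (step S HS Hu) => [Hr|[T HT [HTS HTu]]];
  first by exists S).
  by move: HTS; rewrite ltnNge (leq_trans HN) .
by apply: (IH T) => //; rewrite -ltnS (leq_trans HTS).
Qed.

End FanPart.
Arguments relint_exists {R d n v Delta}.
Arguments uniform_bound {R d n v Delta}.
Arguments coef_uniq {R d n v S a b}.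
Arguments gcone_gen {R d n v S i}.

Section Polytopes.
Variable R : realType.
Variable d : nat.

Lemma polytope_nonempty {P : set 'rV[R]_d} : is_polytope P -> P !=set0.
Proof.
move=> [m [p ->]]; exists (p ord0); exists (fun j => if j == ord0 then 1 else 0).
split; first by move=> j; case: ifP.
split; first by rewrite (bigD1 ord0) //= ?eqxx big1 ?addr0 // => j /negbTE ->.
rewrite (bigD1 ord0) //= ?eqxx scale1r big1 ?addr0 // => j /negbTE ->.
by rewrite scale0r.
Qed.

Lemma polytope_convex {P : set 'rV[R]_d} : is_polytope P ->
  forall y z t, P y -> P z -> 0 <= t <= 1 -> P (y + t *: (z - y)).
Proof.
move=> [m [p ->]] y z t [a [a0 [a1 ->]]] [b [b0 [b1 ->]]] /andP [t0 t1].
exists (fun k => a k + t * (b k - a k)); split.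
  move=> k; have := a0 k; have := b0 k; nra.
split.
  by rewrite big_split /= -mulr_sumr sumrB a1 b1 subrr mulr0 addr0.
rewrite -sumrB scaler_sumr -big_split /=; apply: eq_bigr => k _.
by rewrite -scalerBl scalerA -scalerDl.
Qed.

Lemma coef_le1 m (mu : 'I_m.+1 -> R) : (forall k, 0 <= mu k) ->
  \sum_k mu k = 1 -> forall k, mu k <= 1.
Proof.
move=> mu0 mu1 k; rewrite -mu1 (bigD1 k) //= lerDl.
by apply: sumr_ge0 => j _.
Qed.

Lemma polytope_lin_bound {P : set 'rV[R]_d} : is_polytope P ->
  forall f : 'rV[R]_d -> R, (forall (I : finType) (a : I -> R) (x : I -> 'rV[R]_d),
     f (\sum_i a i *: x i) = \sum_i a i * f (x i)) ->
  exists M, forall x, P x -> `|f x| <= M.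
Proof.
move=> [m [p ->]] f Hf; exists (\sum_k `|f (p k)|) => _ [mu [mu0 [mu1 ->]]].
rewrite Hf; apply: le_trans (ler_norm_sum _ _ _) _; apply: ler_sum => k _.
rewrite normrM ger0_norm // ler_piMl //; exact: coef_le1.
Qed.

Lemma polytope_bounded {P : set 'rV[R]_d} : is_polytope P ->
  exists D, forall y z, P y -> P z -> dotv (z - y) (z - y) <= D.
Proof.
move=> HP.
have Hj : forall j, exists M, forall x, P x -> `|x 0 j| <= M.
  move=> j; have [|M HM] := polytope_lin_bound HP (fun x : 'rV[R]_d => x 0 j).
    by move=> I a x; rewrite summxE; apply: eq_bigr => i _; rewrite mxE.
  by exists M.
have [M HM] := choice Hj.
exists (\sum_j (M j + M j) * (M j + M j)) => y z Py Pz.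
apply: ler_sum => j _; rewrite !mxE.
have e : (z 0 j - y 0 j) * (z 0 j - y 0 j) = `|z 0 j - y 0 j| * `|z 0 j - y 0 j|.
  by rewrite -normrM ger0_norm // -expr2 sqr_ge0.
rewrite e; have h1 : `|z 0 j - y 0 j| <= M j + M j.
  apply: le_trans (ler_normB _ _) _; apply: lerD; [exact: HM | exact: HM].
by apply: ler_pM.
Qed.

Lemma dotv_lin u (I : finType) (a : I -> R) (x : I -> 'rV[R]_d) :
  dotv (\sum_i a i *: x i) u = \sum_i a i * dotv (x i) u.
Proof. exact: dotv_suml. Qed.

Lemma support_has_sup {P : set 'rV[R]_d} u : is_polytope P ->
  has_sup [set dotv x u | x in P].
Proof.
move=> HP; split.
  by have [x Px] := polytope_nonempty HP; exists (dotv x u); exists x.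
have [M HM] := polytope_lin_bound HP (fun x => dotv x u) (dotv_lin u).
exists M => _ [x Px <-]; apply: le_trans (ler_norm _) (HM x Px).
Qed.

Lemma support_ge {P : set 'rV[R]_d} u x : is_polytope P -> P x ->
  dotv x u <= support_fun P u.
Proof.
by move=> HP Px; apply: sup_upper_bound; [exact: support_has_sup | exists x].
Qed.

Lemma support_eq {P : set 'rV[R]_d} u x0 : is_polytope P -> P x0 ->
  (forall y, P y -> dotv u y <= dotv u x0) -> support_fun P u = dotv x0 u.
Proof.
move=> HP Px0 H; apply/le_anti/andP; split; last exact: support_ge.
apply: ge_sup; first by exists (dotv x0 u); exists x0.
by move=> _ [y Py <-]; rewrite dotvC (dotvC x0); exact: H.
Qed.

End Polytopes.
Arguments polytope_nonempty {R d P}.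
Arguments polytope_convex {R d P}.
Arguments polytope_bounded {R d P}.
Arguments polytope_lin_bound {R d P}.
Arguments support_ge {R d P}.
Arguments support_eq {R d P}.
Arguments support_has_sup {R d P}.

Section Main.
Variable R : realType.
Variables (d n : nat) (v : 'I_n -> 'rV[R]_d) (Delta : {set {set 'I_n}}).
Variables (Hf : is_fan v Delta) (Hs : is_simplicial v Delta) (Hp : is_polytopal v Delta).

Definition Fspec (u : 'rV[R]_d) (lam : 'rV[R]_n) := exists2 S, S \in Delta &
     [/\ relint_gcone v S u, (forall i, i \notin S -> lam 0 i = 0) &
         u = \sum_(i in S) lam 0 i *: v i].

Lemma fan_coords_spec u : Fspec u (fan_coords v Delta u).
Proof.
rewrite /fan_coords; apply: xgetPex.
have [S HS Hr] := relint_exists Hf Hs Hp u.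
have [lam [lam0 Hu]] := proj1 Hr.
exists (\row_i (if i \in S then lam i else 0)); exists S => //; split => //.
  by move=> i Hi; rewrite mxE (negbTE Hi).
by rewrite Hu; apply: eq_bigr => i Hi; rewrite mxE Hi.
Qed.

Lemma Fspec_ge0 {u lam} : Fspec u lam -> forall k, 0 <= lam 0 k.
Proof.
move=> [S HS [[[mu [mu0 Hmu]] _] Hz Hu]] k.
case: (boolP (k \in S)) => Hk; last by rewrite Hz.
rewrite (coef_uniq (Hs S HS) (b := mu)) ?mu0 //.
by rewrite -Hu -Hmu.
Qed.

Lemma coords_bounded : exists C, forall u, enorm u = 1 ->
  forall k, fan_coords v Delta u 0 k <= C.
Proof.
have [C [C0 HC]] := uniform_bound Hs.
exists C => u Hu k.
have [S HS [_ Hz Hlu]] := fan_coords_spec u.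
have := HC S HS (fun i => fan_coords v Delta u 0 i) Hz k.
rewrite -Hlu Hu mulr1 => H; exact: le_trans (ler_norm _) H.
Qed.

Lemma coord_le_c (u : 'rV[R]_d) k : enorm u = 1 -> fan_coords v Delta u 0 k <= cDelta v Delta.
Proof.
move=> Hu; apply: sup_upper_bound; last by exists u, k.
split; first by exists (fan_coords v Delta u 0 k), u, k.
have [C HC] := coords_bounded; exists C => _ [u' [k' [Hu' ->]]]; exact: HC.
Qed.

Lemma card_le_d (S : {set 'I_n}) : S \in Delta -> (#|S| <= d)%N.
Proof.
move=> HS; have Hfree := row_free_Mat (Hs S HS).
move: Hfree; rewrite /row_free => /eqP <-; exact: rank_leq_col.
Qed.

Lemma unit_c_ge0 {u : 'rV[R]_d} : enorm u = 1 -> 0 <= cDelta v Delta.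
Proof.
move=> Hu; have [S HS [_ Hz Hlu]] := fan_coords_spec u.
case: (pselect (exists k, k \in S)) => [[k Hk]|NS].
  apply: le_trans _ (coord_le_c u k Hu); exact: Fspec_ge0 (fan_coords_spec u) k.
exfalso; move: Hu; rewrite Hlu big_pred0 ?enorm0.
  by move/eqP; rewrite eq_sym oner_eq0.
by move=> i; apply/negP => Hi; apply: NS; exists i.
Qed.

Lemma c_ge0 : (0 < d)%N -> 0 <= cDelta v Delta.
Proof.
move=> d0; pose u : 'rV[R]_d := \row_j (if (j : nat) == 0%N then 1 else 0).
apply: (@unit_c_ge0 u).
rewrite /enorm /dotv (bigD1 (Ordinal d0)) //= big1 ?addr0 ?mxE /= ?mulr1 ?sqrtr1 //.
move=> j Hj; rewrite mxE; case: eqP => [Hj0|]; last by rewrite mul0r.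
by exfalso; move/negP: Hj; apply; apply/eqP/val_inj.
Qed.


Definition Kc (h h' : 'rV[R]_n) := Num.sqrt (d%:R) * cDelta v Delta * enorm (h - h').

Lemma key {P' : set 'rV[R]_d} {h h' : 'rV[R]_n} {x : 'rV[R]_d} :
  is_polytope P' -> coarsened_by v Delta P' ->
  (forall i, h' 0 i = support_fun P' (v i)) ->
  Ph v h x -> forall w, exists2 z, P' z & dotv w x - dotv w z <= enorm w * Kc h h'.
Proof.
move=> HP' [Hc1 _] Hh' Hx w.
have [z0 Pz0] := polytope_nonempty HP'.
have [w0|wn0] := eqVneq w 0.
  by exists z0 => //; rewrite w0 !dotv0l subrr enorm0 mul0r.
set r := enorm w.
have r0 : 0 < r.
  rewrite lt_neqAle enorm_ge0 andbT eq_sym; apply/eqP => E.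
  by move/eqP: wn0; apply; apply: enorm_eq0.
pose u := r^-1 *: w.
have Hu : enorm u = 1.
  by rewrite enormZ ger0_norm ?invr_ge0 ?ltW // mulVf // lt0r_neq0.
have Hw : w = r *: u by rewrite scalerA mulfV ?scale1r // lt0r_neq0.
have Hspec := fan_coords_spec u.
set lam := fan_coords v Delta u in Hspec *.
have lam0 := Fspec_ge0 Hspec.
case: Hspec => S HS [_ Hz Hlu].
have [x0 Px0 Hsub] := Hc1 S HS.
exists x0 => //.
have Hh'k : forall k, k \in S -> h' 0 k = dotv x0 (v k).
  move=> k Hk; rewrite Hh'; apply: support_eq => // y Py.
  exact: (Hsub _ (gcone_gen Hk)) y Py.
have Hlam : forall y : 'rV[R]_n, dotv lam y = \sum_(j in S) lam 0 j * y 0 j.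
  move=> y; rewrite /dotv (bigID (fun j => j \in S)) /= [X in _ + X]big1 ?addr0 //.
  by move=> j Hj; rewrite Hz // mul0r.
have E1 : dotv u x - dotv u x0 <= dotv lam (h - h').
  rewrite Hlam Hlu !dotv_suml -sumrB.
  apply: ler_sum => k Hk; rewrite !mxE Hh'k // -mulrBr; apply: ler_wpM2l => //.
  by rewrite (dotvC (v k) x0) lerD2r dotvC; exact: Hx.
have E2 : dotv lam (h - h') <= Kc h h'.
  apply: le_trans (CauchyS lam (h - h')) _; apply: ler_wpM2r; first exact: enorm_ge0.
  have c0 := unit_c_ge0 Hu.
  rewrite -(ger0_norm c0) -sqrtr_sqr -sqrtrM ?ler0n // ler_sqrt ?mulr_ge0 ?ler0n ?sqr_ge0 //.
  rewrite Hlam.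
  apply: le_trans (_ : \sum_(j in S) cDelta v Delta ^+ 2 <= _).
    apply: ler_sum => j Hj; rewrite expr2; apply: ler_pM => //; exact: coord_le_c.
  rewrite sumr_const ?mulr1 -[X in X <= _]mulr_natl; apply: ler_wpM2r; first exact: sqr_ge0.
  by rewrite ler_nat card_le_d.
rewrite Hw !dotvZl -mulrBr; apply: ler_wpM2l; first exact: ltW.
by have := le_trans E1 E2; rewrite /u !dotvZl.
Qed.

Lemma poly_sub_Ph {P : set 'rV[R]_d} {h : 'rV[R]_n} : is_polytope P ->
  (forall i, h 0 i = support_fun P (v i)) -> forall x, P x -> Ph v h x.
Proof. by move=> HP Hh x Px i; rewrite Hh; exact: support_ge. Qed.

Lemma Kc_ge0 h h' : 0 <= Kc h h'.
Proof.
rewrite /Kc; have [d0|d0] := posnP d.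
  have -> : Num.sqrt (d%:R : R) = 0 by rewrite d0 sqrtr0.
  by rewrite !mul0r.
by rewrite mulr_ge0 ?enorm_ge0 // mulr_ge0 ?sqrtr_ge0 // c_ge0.
Qed.

Lemma one_side h h' : deformation_cone v Delta h -> deformation_cone v Delta h' ->
  forall x, Ph v h x -> forall e, 0 < e -> exists2 y, Ph v h' y & enorm (x - y) <= Kc h h' + e.
Proof.
move=> _ [P' [HP' Hc' Hh']] x Hx e he.
have [y Py Hy] := descent (Kc_ge0 h h') (polytope_nonempty HP') (polytope_convex HP')
  (polytope_bounded HP') (key HP' Hc' Hh' Hx) e he.
by exists y => //; exact: poly_sub_Ph HP' Hh' y Py.
Qed.

Lemma Ph_nonempty h : deformation_cone v Delta h -> Ph v h !=set0.
Proof.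
move=> [P [HP _ Hh]]; have [x Px] := polytope_nonempty HP.
by exists x; exact: poly_sub_Ph HP Hh x Px.
Qed.

Lemma Kc_sym h h' : Kc h h' = Kc h' h.
Proof. by rewrite /Kc -enormN opprB. Qed.

End Main.

Theorem lemma2p5 (R : realType) (d n : nat) (v : 'I_n -> 'rV[R]_d)
  (Delta : {set {set 'I_n}}) :
  is_fan v Delta -> is_simplicial v Delta -> is_polytopal v Delta ->
  forall h h' : 'rV[R]_n,
    deformation_cone v Delta h -> deformation_cone v Delta h' ->
    hausdorff (Ph v h) (Ph v h') <=
      Num.sqrt (d%:R) * cDelta v Delta * enorm (h - h').
Proof.
move=> Hf Hs Hp h h' Hh Hh'.
have sym : forall (a b : 'rV[R]_d), enorm (a - b) = enorm (b - a).
  by move=> a b; rewrite -enormN opprB.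
rewrite /hausdorff ge_max; apply/andP; split.
  apply: (sup_inf_le (f := fun x y => enorm (x - y))).
  - exact: (@Ph_nonempty R d n v Delta h Hh).
  - by move=> x y; exact: enorm_ge0.
  - exact: (@one_side R d n v Delta Hf Hs Hp h h' Hh Hh').
apply: (sup_inf_le (f := fun y x => enorm (x - y))).
- exact: (@Ph_nonempty R d n v Delta h' Hh').
- by move=> x y; exact: enorm_ge0.
- move=> y Hy e he; have [x Hx Hxy] := @one_side R d n v Delta Hf Hs Hp h' h Hh' Hh y Hy e he.
  by exists x => //; rewrite sym; move: Hxy; rewrite Kc_sym.
Qed.
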